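(* Let $n \geq 1$ and let $D_m'$ (for $m \ge 1$) be the digraphs defined in the context. Then $D_n'$ has no induced directed cycle of odd length at least $5$, $\omega(D_n') \leq 3$, and $\vec{\chi}(D_{4n}') \geq n$.
   Context: Digraphs $D_m$ are defined recursively. $D_1$ is a single vertex with no edges. For $m \geq 2$, take $m-1$ disjoint copies $D_{m-1}^1,\dots,D_{m-1}^{m-1}$ of $D_{m-1}$; let $\mathcal{T}$ be the set of all sequences $T=(x_1,\dots,x_{m-1})$ with $x_i \in V(D_{m-1}^i)$ for each $i$. For each $T \in \mathcal{T}$ add a new vertex $v_T$ and, for each $i \in \{1,\dots,m-1\}$, an edge from $x_i$ to $v_T$. The resulting digraph is $D_m$. It is a known fact that $D_m$ is acyclic and that for any two vertices $u,v$ of $D_m$ there is at most one directed path from $u$ to $v$ in $D_m$. The length of a path is its number of edges. The digraph $D_m'$ has $V(D_m')=V(D_m)$ and, for every ordered pair $(u,v)$ of vertices such that there is a directed path in $D_m$ from $u$ to $v$: if that path has length $\equiv 1 \pmod 3$, $D_m'$ has the edge $uv$; if that path has length $\equiv 2 \pmod 3$, $D_m'$ has the edge $vu$. $D_m'$ has no other edges. The clique number $\omega(D)$ of a digraph is the clique number of its underlying undirected graph (same vertices, $u,v$ adjacent iff $uv$ or $vu$ is an edge). A digraph is acyclic if it has no directed cycle; $\vec{\chi}(D)$, the dichromatic number, is the least $k$ such that $V(D)$ can be partitioned into $k$ sets each inducing an acyclic subdigraph. An induced directed cycle is a directed cycle $v_1\cdots v_\ell v_1$ whose vertex set induces exactly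 the edges $v_iv_{i+1}$ (indices mod $\ell$). *)

(* Defs.v *)
From HB Require Import structures.
From mathcomp Require Import all_boot.
Set Implicit Arguments. Unset Strict Implicit. Unset Printing Implicit Defensive.

Definition dipath (T : finType) (E : rel T) (u v : T) (l : nat) : Prop :=
  exists s : seq T, [/\ path E u s, last u s = v, uniq (u :: s) & size s = l].

Definition dicycle (T : Type) (E : T -> T -> Prop) (l : nat) (c : 'I_l -> T) : Prop :=
  0 < l /\ injective c /\ forall i : 'I_l, E (c i) (c (ordS i)).

Definition induced_dicycle (T : Type) (E : T -> T -> Prop) (l : nat) (c : 'I_l -> T) : Prop :=
  dicycle E c /\ forall i j : 'I_l, E (c i) (c j) -> j = ordS i.

Definition acyclic_on (T : finType) (E : T -> T -> Prop) (A : {set T}) : Prop :=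
  forall (l : nat) (c : 'I_l -> T), (forall i, c i \in A) -> ~ dicycle E c.

Definition acyclic_colorable (T : finType) (E : T -> T -> Prop) (k : nat) : Prop :=
  exists f : T -> 'I_k, forall i : 'I_k, acyclic_on E [set x | f x == i].

Definition dichromatic_ge (T : finType) (E : T -> T -> Prop) (n : nat) : Prop :=
  forall k, acyclic_colorable E k -> n <= k.

Definition clique (T : finType) (E : T -> T -> Prop) (S : {set T}) : Prop :=
  forall u v, u \in S -> v \in S -> u != v -> E u v \/ E v u.

Definition clique_number_le (T : finType) (E : T -> T -> Prop) (k : nat) : Prop :=
  forall S : {set T}, clique E S -> #|S| <= k.

(* Dvert k is the vertex type of D_{k+1}.
   D_1 : a single vertex.
   D_{k+2} : k+1 copies of D_{k+1} (inl (i, x) = vertex x of copy i), plus a new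
   vertex v_T (inr T) for every T = (x_1,...,x_{k+1}) with x_i in copy i. *)
Fixpoint Dvert (k : nat) : finType :=
  match k with
  | 0 => unit
  | k'.+1 => (('I_k'.+1 * Dvert k') + {ffun 'I_k'.+1 -> Dvert k'})%type
  end.

Fixpoint Dedge (k : nat) : rel (Dvert k) :=
  match k return rel (Dvert k) with
  | 0 => fun _ _ => false
  | k'.+1 => fun x y =>
      match x, y with
      | inl (i, a), inl (j, b) => (i == j) && @Dedge k' a b
      | inl (i, a), inr T => T i == a
      | _, _ => false
      end
  end.

(* D_m for m >= 1 *)
Definition DV (m : nat) : finType := Dvert m.-1.
Definition DE (m : nat) : rel (DV m) := @Dedge m.-1.

Definition DE' (m : nat) (u v : DV m) : Prop :=
  (exists l, dipath (@DE m) u v l /\ l %% 3 = 1) \/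
  (exists l, dipath (@DE m) v u l /\ l %% 3 = 2).

(* Main.v *)
Require Import Defs.
From mathcomp Require Import all_boot zify.
From Stdlib Require Import Classical IndefiniteDescription.
Set Implicit Arguments. Unset Strict Implicit. Unset Printing Implicit Defensive.

Fixpoint ht (k : nat) : Dvert k -> nat :=
  match k return Dvert k -> nat with
  | 0 => fun _ => 0
  | k'.+1 => fun x => match x with inl (_, a) => @ht k' a | inr _ => k'.+1 end
  end.

Lemma ht_le k (x : Dvert k) : ht x <= k.
Proof.
elim: k x => [//|k IH] [[i a]|T] /=; last by [].
exact: leq_trans (IH a) (leqnSn k).
Qed.

Lemma ht_edge k (x y : Dvert k) : Dedge x y -> ht x < ht y.
Proof.
elim: k x y => [//|k IH] [[i a]|T] [[j b]|T'] //=.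
- by case/andP => _ /IH.
- by move=> _; rewrite ltnS ht_le.
Qed.

Lemma path_ht k (u : Dvert k) s : path (@Dedge _) u s -> ht u + size s <= ht (last u s).
Proof.
elim: s u => [|y s IH] u /=; first by rewrite addn0.
case/andP => /ht_edge H /IH H2. lia.
Qed.

Definition walk k (u v : Dvert k) l :=
  exists s, [/\ path (@Dedge k) u s, last u s = v & size s = l].

Lemma walk_dipath k (u v : Dvert k) l : walk u v l <-> dipath (@Dedge k) u v l.
Proof.
split; last by case=> s [? ? ? ?]; exists s.
case=> s [P L S]; exists s; split => //.
have: sorted ltn (map (@ht k) (u :: s)).
  rewrite /= (homo_path (e := @Dedge k)) //. exact: ht_edge.
by rewrite ltn_sorted_uniq_leq => /andP [/map_uniq].
Qed.

Lemma walk_cat k (u v w : Dvert k) a b : walk u v a -> walk v w b -> walk u w (a + b).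
Proof.
case=> s [P L S] [t [P' L' S']]; exists (s ++ t).
by rewrite cat_path last_cat size_cat L P P' S S'.
Qed.

Lemma walk_ht k (u v : Dvert k) a : walk u v a -> ht u + a <= ht v.
Proof. by case=> s [P <- <-]; apply: path_ht. Qed.

Definition pr k (i : 'I_k.+1) (z : Dvert k.+1) : Dvert k :=
  match z with inl (_, a) => a | inr T => T i end.

Lemma proj_path k (i : 'I_k.+1) (x : Dvert k) (u : Dvert k.+1) s :
  path (@Dedge _) u s -> last u s = inl (i, x) ->
  exists a, [/\ u = inl (i, a), path (@Dedge _) a (map (pr i) s) & last a (map (pr i) s) = x].
Proof.
elim: s u => [|y s IH] u /=.
  by move=> _ ->; exists x.
case/andP => E P L; case: (IH y P L) => b [Y P' L']; subst y.
move: E; case: u => [[j a]|T] //= /andP [/eqP -> E].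
by exists a; rewrite /= E P' L'.
Qed.

Lemma last_inr k (u : Dvert k.+1) T s :
  path (@Dedge _) u s -> last u s = inr T ->
  (s = [::] /\ u = inr T) \/
  exists j s', [/\ s = rcons s' (inr T), path (@Dedge _) u s' & last u s' = inl (j, T j)].
Proof.
case/lastP: s => [|s y]; first by move=> _ /= ->; left; split.
rewrite rcons_path last_rcons => /andP [P E] Y; subst y; right.
move: E; case H: (last u s) => [[j b]|T'] //= /eqP E.
by exists j, s; split => //; rewrite H E.
Qed.

Lemma walk_uniq k (u v : Dvert k) a b : walk u v a -> walk u v b -> a = b.
Proof.
elim: k u v a b => [|k IH] u v a b.
  by case=> [[|? ?] [? ? <-]] [[|? ?] [? ? <-]].
case=> s [P L <-] [t [P' L' <-]].
case: v L L' => [[i x]|T] L L'.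
- case: (proj_path P L) => a1 [U1 Q1 M1].
  case: (proj_path P' L') => a2 [U2 Q2 M2].
  rewrite U1 in U2; case: U2 => E; subst a2.
  rewrite -(size_map (pr i) s) -(size_map (pr i) t).
  apply: (IH a1 x); [by exists (map (pr i) s) | by exists (map (pr i) t)].
- case: (last_inr P L) => [[-> U]|[j [s' [-> Q M]]]];
  case: (last_inr P' L') => [[-> U']|[j' [t' [-> Q' M']]]] //.
  + by case: (proj_path Q' M') => ? [E]; rewrite U in E.
  + by case: (proj_path Q M) => ? [E]; rewrite U' in E.
  case: (proj_path Q M) => a1 [U1 Q1 M1].
  case: (proj_path Q' M') => a2 [U2 Q2 M2].
  rewrite U1 in U2; case: U2 => E1 E2; subst j' a2.
  rewrite !size_rcons -(size_map (pr j) s') -(size_map (pr j) t'); congr S.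
  apply: (IH a1 (T j)); [by exists (map (pr j) s') | by exists (map (pr j) t')].
Qed.

Lemma DE'_walk n (u v : DV n) :
  DE' u v <-> (exists e, walk u v e /\ e %% 3 = 1) \/ (exists e, walk v u e /\ e %% 3 = 2).
Proof.
rewrite /DE' /DE /DV.
split; case=> [[e [H1 H2]]|[e [H1 H2]]];
  [left|right|left|right]; exists e; split => //; by apply/walk_dipath.
Qed.

Lemma iter_ordS l (i : 'I_l) m : val (iter m (@ordS l) i) = (i + m) %% l.
Proof.
elim: m => [|m IH] /=; first by rewrite addn0 modn_small.
by rewrite IH /= -addn1 modnDml addn1 addnS.
Qed.

Lemma part1 n (l : nat) (c : 'I_l -> DV n) : odd l -> 5 <= l -> ~ induced_dicycle (@DE' n) c.
Proof.
move=> Ol Hl [[_ [_ Cy]] Ind].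
pose up i := exists e, walk (c i) (c (ordS i)) e /\ e %% 3 = 1.
pose down i := exists e, walk (c (ordS i)) (c i) e /\ e %% 3 = 2.
have UD i : up i \/ down i by move/DE'_walk: (Cy i).
have bad i : DE' (c (ordS (ordS i))) (c i) -> False.
  move/Ind => E.
  have := congr1 val E; rewrite -[ordS (ordS (ordS i))]/(iter 3 (@ordS l) i) iter_ordS.
  have := ltn_ord i. move=> H1 /= H2.
  case: (ltnP (i + 3) l) => H3.
    by rewrite modn_small // in H2; lia.
  rewrite -(subnK H3) modnDr modn_small in H2; lia.
have K1 i : up i -> up (ordS i) -> False.
  case=> e1 [W1 E1] [e2 [W2 E2]]; apply: (bad i); apply/DE'_walk; right.
  exists (e1 + e2); split; first exact: walk_cat W1 W2. lia.
have K2 i : down i -> down (ordS i) -> False.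
  case=> e1 [W1 E1] [e2 [W2 E2]]; apply: (bad i); apply/DE'_walk; left.
  exists (e2 + e1); split; first exact: walk_cat W2 W1. lia.
have Alt i : up (ordS i) <-> ~ up i.
  split; first by move=> H1 H2; exact: K1 H2 H1.
  move=> H; have D : down i by case: (UD i).
  by case: (UD (ordS i)) => // /(K2 _ D).
have l0 : 0 < l by lia.
pose i0 := Ordinal l0.
have It m : (up (iter m (@ordS l) i0) <-> if odd m then ~ up i0 else up i0).
  elim: m => [|m IH] //=.
  rewrite Alt; case: (odd m) IH => /= IH; case: (classic (up i0)); tauto.
have : iter l (@ordS l) i0 = i0.
  by apply: val_inj; rewrite iter_ordS /= add0n modnn.
move=> E; move: (It l); rewrite E Ol; case: (classic (up i0)); tauto.
Qed.

Lemma part2 n : clique_number_le (@DE' n) 3.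
Proof.
move=> S Cl.
case: (set_0Vmem S) => [-> | [x0 Hx0]]; first by rewrite cards0.
case: (arg_minnP (@ht n.-1) Hx0) => m Hm Min.
have G x : exists e, x \in S -> walk m x e.
  case Hx: (x \in S); last by exists 0.
  case: (eqVneq m x) => [<-|mx].
    by exists 0 => _; exists [::].
  case: (Cl m x Hm Hx mx) => /DE'_walk [[e [W E]]|[e [W E]]];
    try by exists e.
  + have := walk_ht W; have := Min x Hx; lia.
  + have := walk_ht W; have := Min x Hx; lia.
pose g x := proj1_sig (constructive_indefinite_description _ (G x)).
have Gg x : x \in S -> walk m x (g x) := proj2_sig (constructive_indefinite_description _ (G x)).
have L x y a b e : walk m x a -> walk m y b -> walk x y e -> e %% 3 <> 0 -> a %% 3 <> b %% 3.
  move=> Wa Wb We He; have := walk_uniq (walk_cat Wa We) Wb; lia.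
pose r x : 'I_3 := Ordinal (ltn_pmod (g x) (isT : 0 < 3)).
have inj : {in S &, injective r}.
  move=> x y Hx Hy /(congr1 val) /= Hr.
  case: (eqVneq x y) => // xy.
  case: (Cl x y Hx Hy xy) => /DE'_walk [[e [W E]]|[e [W E]]].
  + by case: (L _ _ _ _ _ (Gg x Hx) (Gg y Hy) W); lia.
  + by case: (L _ _ _ _ _ (Gg y Hy) (Gg x Hx) W); lia.
  + by case: (L _ _ _ _ _ (Gg y Hy) (Gg x Hx) W); lia.
  + by case: (L _ _ _ _ _ (Gg x Hx) (Gg y Hy) W); lia.
rewrite -(card_in_imset inj).
by apply: leq_trans (max_card _) _; rewrite card_ord.
Qed.

Fixpoint dflt (k : nat) : Dvert k :=
  match k return Dvert k with
  | 0 => tt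
  | k'.+1 => inl (ord0, dflt k')
  end.

Lemma zykov k : forall (C : finType) (g : Dvert k -> C),
  (forall x y, Dedge x y -> g x != g y) ->
  forall A : {set C}, #|A| <= k -> exists x, g x \notin A.
Proof.
elim: k => [|k IH] C g Pg A HA.
  exists tt; move: HA; rewrite leqn0 cards_eq0 => /eqP ->; by rewrite in_set0.
have inner j : j <= k.+1 -> exists t : 'I_k.+1 -> Dvert k,
    forall i i' : 'I_k.+1, i < j -> i' < j -> g (inl (i, t i)) = g (inl (i', t i')) -> i = i'.
  elim: j => [|j IHj] Hj.
    by exists (fun _ => dflt k).
  case: (IHj (ltnW Hj)) => t Ht.
  have Hj' : j <= k.+1 by exact: ltnW.
  pose jj : 'I_k.+1 := Ordinal Hj.
  pose B := [set g (inl (widen_ord Hj' i, t (widen_ord Hj' i))) | i : 'I_j].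
  have HB : #|B| <= k.
    apply: leq_trans (leq_imset_card _ _) _.
    apply: leq_trans (max_card _) _; rewrite card_ord; lia.
  have Pj : forall x y, Dedge x y -> g (inl (jj, x)) != g (inl (jj, y)).
    by move=> x y E; apply: Pg => /=; rewrite eqxx.
  case: (IH C _ Pj B HB) => a Ha.
  have inB (i : 'I_k.+1) : i < j -> g (inl (i, t i)) \in B.
    move=> Hi; apply/imsetP; exists (Ordinal Hi) => //.
    by have -> : widen_ord Hj' (Ordinal Hi) = i by apply: val_inj.
  exists (fun i => if i == jj then a else t i) => i i' Hi Hi'.
  case: (eqVneq i jj) => [->|ij]; case: (eqVneq i' jj) => [->|ij'] //.
  + move=> E; have Hi2 : i' < j.
      by move: ij' Hi'; rewrite ltnS leq_eqVlt => /eqP ij'; case/orP => // /eqP X; case: ij'; apply: val_inj.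
    by move: Ha; rewrite E inB.
  + move=> E; have Hi2 : i < j.
      by move: ij Hi; rewrite ltnS leq_eqVlt => /eqP ij; case/orP => // /eqP X; case: ij; apply: val_inj.
    by move: Ha; rewrite -E inB.
  + apply: Ht.
      by move: ij Hi; rewrite ltnS leq_eqVlt => /eqP ij; case/orP => // /eqP X; case: ij; apply: val_inj.
    by move: ij' Hi'; rewrite ltnS leq_eqVlt => /eqP ij'; case/orP => // /eqP X; case: ij'; apply: val_inj.
case: (inner k.+1 (leqnn _)) => t Ht.
pose T := [ffun i => t i].
pose C0 := [set g (inl (i, t i)) | i : 'I_k.+1].
have HC0 : #|C0| = k.+1.
  rewrite card_imset ?card_ord // => i i' E; exact: Ht (ltn_ord i) (ltn_ord i') E.
pose v : Dvert k.+1 := inr T.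
have vC0 : g v \notin C0.
  apply/imsetP => [[i _ E]].
  by have := Pg (inl (i, t i)) v; rewrite /= ffunE eqxx E eqxx => /(_ isT).
case Hv: (g v \in A); last by exists v; rewrite Hv.
have : ~~ (g v |: C0 \subset A).
  apply/negP => /subset_leq_card; rewrite cardsU1 vC0 HC0; lia.
case/subsetPn => z; rewrite in_setU1; case/orP => [/eqP ->|]; first by rewrite Hv.
by case/imsetP => i _ -> H; exists (inl (i, t i)).
Qed.

Lemma part3 n : dichromatic_ge (@DE' (4 * n)) n.
Proof.
move=> k [f Hf].
pose K := (4 * n).-1.
pose g (x : Dvert K) : 'I_k * bool := (f x, [exists w, Dedge w x && (f w == f x)]).
have Pg : forall x y : Dvert K, Dedge x y -> g x != g y.
  move=> x y Exy; apply/negP => /eqP [Ef Eb].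
  have : [exists w, Dedge w y && (f w == f y)] by apply/existsP; exists x; rewrite Exy Ef eqxx.
  rewrite -Eb => /existsP [w /andP [Ewx /eqP Ew]].
  pose c (i : 'I_3) : DV (4 * n) := nth w [:: w; x; y] i.
  have hw := ht_edge Ewx; have hx := ht_edge Exy.
  apply: (Hf (f w) 3 c).
    by case=> [[|[|[|i]]] Hi] //=; rewrite inE ?Ew -?Ef ?eqxx.
  split => //; split.
    move=> [[|[|[|i]]] Hi] [[|[|[|j]]] Hj] //= E; try (by apply: val_inj);
      by move: hw hx; rewrite /c /= in E; rewrite ?E; lia.
  case=> [[|[|[|i]]] Hi] //=; apply/DE'_walk.
  - by left; exists 1; split => //; exists [:: x]; rewrite /= Ewx.
  - by left; exists 1; split => //; exists [:: y]; rewrite /= Exy.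
  - by right; exists 2; split => //; exists [:: x; y]; rewrite /= Ewx Exy.
case: (leqP #|[set: 'I_k * bool]| K) => H.
  by case: (zykov Pg H) => x; rewrite in_setT.
move: H; rewrite cardsT card_prod card_ord card_bool /K; lia.
Qed.

Theorem mainTheorem6 (n : nat) : 1 <= n ->
  (forall (l : nat) (c : 'I_l -> DV n), odd l -> 5 <= l -> ~ induced_dicycle (@DE' n) c)
  /\ clique_number_le (@DE' n) 3
  /\ dichromatic_ge (@DE' (4 * n)) n.
Proof.
move=> _; split; first exact: part1.
split; [exact: part2 | exact: part3].
Qed.
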